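(* There is a universal constant $c>0$ such that for infinitely many $k$ there exist collaborative learning problems with $k$ agents, strategy space $\mathbb{R}_+^k$ and well-behaved utility functions whose Price of Stability and Price of Fairness are both at least $c\sqrt{k}$. Moreover, such problems exist in each of the following two settings: (a) a random coverage setting in which every agent's distribution is uniform over a subset of the domain, all subsets having the same size; (b) a linear utility setting ${\bf u}({\boldsymbol\theta})=W{\boldsymbol\theta}$ with $W_{ii}=1$ and $W_{ij}=O(1/\sqrt{k})$ for $j\ne i$.
   Context: A collaborative learning problem has $k$ agents, strategy space $\Theta\subseteq\mathbb{R}_+^k$, non-decreasing utilities $u_i$ and thresholds $\mu_i$, each agent able to meet her threshold alone with some $\vartheta_i$ (i.e. $u_i(\vartheta_i,\mathbf{0}_{-i})\ge\mu_i$, where $(x,{\boldsymbol\theta}_{-i})$ replaces the $i$-th entry by $x$). ${\boldsymbol\theta}$ is feasible if $u_i({\boldsymbol\theta})\ge\mu_i$ for all $i$. A socially optimal solution minimizes $\mathbf{1}^\top{\boldsymbol\theta}$ over feasible ${\boldsymbol\theta}\in\Theta$. A feasible ${\boldsymbol\theta}$ is a stable equilibrium if no $i$ has $\theta_i'<\theta_i$ with $(\theta_i',{\boldsymbol\theta}_{-i})\in\Theta$, $u_i(\theta_i',{\boldsymbol\theta}_{-i})\ge\mu_i$; it is envy-free if no $i,j$ have $\theta_j<\theta_i$, ${\boldsymbol\theta}^{(i,j)}\in\Theta$ and $u_i({\boldsymbol\theta}^{(i,j)})\ge\mu_i$, where ${\boldsymbol\theta}^{(i,j)}$ swaps entries $i,j$.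 Price of Stability $=\min_{{\boldsymbol\theta}\text{ stable eq.}}\mathbf{1}^\top{\boldsymbol\theta}/\mathbf{1}^\top{\boldsymbol\theta}^{\mathrm{opt}}$; Price of Fairness $=\min_{{\boldsymbol\theta}\text{ envy-free}}\mathbf{1}^\top{\boldsymbol\theta}/\mathbf{1}^\top{\boldsymbol\theta}^{\mathrm{opt}}$, with ${\boldsymbol\theta}^{\mathrm{opt}}$ socially optimal. Utilities are well-behaved over a box $\prod_i[0,C_i]\subseteq\Theta$ (here the box $\prod_i[0,\vartheta_i]$) if for each $i$ there are $c_1^i\ge0,c_2^i>0$ with $\partial u_i/\partial\theta_i\ge c_2^i$ and $0\le\partial u_i/\partial\theta_j\le c_1^i$ ($j\ne i$) on the box (one-sided derivatives where needed). Random coverage: finite domain $\mathcal{X}$, agent $i$ has distribution $(q_{ix})_{x\in\mathcal{X}}$; for integers $m_j$, $U_i({\bf m})=1-\frac12\sum_{x}q_{ix}\prod_{j}(1-q_{jx})^{m_j}$; for real ${\boldsymbol\theta}$, $u_i({\boldsymbol\theta})=\mathbb{E}[U_i({\bf m})]$ where the $m_j$ are independent and $m_j=\lfloor\theta_j\rfloor+\mathrm{Bernoulli}(\theta_j-\lfloor\theta_j\rfloor)$. Linear setting: $u_i({\boldsymbol\theta})=\sum_jW_{ij}\theta_j$ with $W\in[0,1]^{k\times k}$. *)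

(* Defs.v *)
From HB Require Import structures.
From mathcomp Require Import all_boot all_order all_algebra.
From mathcomp Require Import all_classical all_reals all_analysis.
Set Implicit Arguments. Unset Strict Implicit. Unset Printing Implicit Defensive.
Import Order.TTheory GRing.Theory Num.Theory numFieldNormedType.Exports.
Local Open Scope classical_set_scope.
Local Open Scope ring_scope.

Section CollabLearning.
Variable R : realType.

Definition vec (k : nat) := 'I_k -> R.

Definition upd k (th : vec k) (i : 'I_k) (x : R) : vec k :=
  fun j => if j == i then x else th j.
Definition swapv k (th : vec k) (i j : 'I_k) : vec k :=
  fun l => if l == i then th j else if l == j then th i else th l.

Definition inTheta k (th : vec k) := forall i, 0 <= th i.
Definition cost k (th : vec k) : R := \sum_(i < k) th i.

Section Problem.
Variables (k : nat) (u : 'I_k -> vec k -> R) (mu : 'I_k -> R).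

Definition feasible (th : vec k) := inTheta th /\ forall i, mu i <= u i th.

Definition socially_optimal (th : vec k) :=
  feasible th /\ forall th', feasible th' -> cost th <= cost th'.

Definition stable_eq (th : vec k) :=
  feasible th /\
  ~ (exists i x, x < th i /\ inTheta (upd th i x) /\ mu i <= u i (upd th i x)).

Definition envy_free (th : vec k) :=
  feasible th /\
  ~ (exists i j, th j < th i /\ inTheta (swapv th i j) /\ mu i <= u i (swapv th i j)).

Definition rderiv_is (g : R -> R) (t l : R) :=
  (fun h => (g (t + h) - g t) / h) @ 0^'+ --> l.
Definition lderiv_is (g : R -> R) (t l : R) :=
  (fun h => (g (t + h) - g t) / h) @ 0^'- --> l.

(* well-behaved utilities over the box prod_i [0, C_i]; at every point of the
   box, the partial derivatives are required (as one-sided derivatives, in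
   every direction staying inside the box) to exist and satisfy the bounds *)
Definition well_behaved_on (C : vec k) :=
  forall i, exists c1 c2 : R, 0 <= c1 /\ 0 < c2 /\
    forall th : vec k, (forall l, 0 <= th l <= C l) -> forall j : 'I_k,
      let g := fun t => u i (upd th j t) in
      let ok := fun d => if j == i then c2 <= d else 0 <= d <= c1 in
      (th j < C j -> exists d, rderiv_is g (th j) d /\ ok d) /\
      (0 < th j -> exists d, lderiv_is g (th j) d /\ ok d).

Definition wb_clp :=
  (forall i (th th' : vec k), inTheta th -> (forall j, th j <= th' j) ->
      u i th <= u i th') /\
  exists vt : vec k,
    (forall i, 0 <= vt i /\ mu i <= u i (upd (fun _ => 0) i (vt i))) /\
    well_behaved_on vt.

Definition PoS_at_least (r : R) :=
  exists opt, socially_optimal opt /\ 0 < cost opt /\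
    (exists th, stable_eq th) /\
    forall th, stable_eq th -> r <= cost th / cost opt.

Definition PoF_at_least (r : R) :=
  exists opt, socially_optimal opt /\ 0 < cost opt /\
    (exists th, envy_free th) /\
    forall th, envy_free th -> r <= cost th / cost opt.

End Problem.

Definition U_cov k n (q : 'I_k -> 'I_n -> R) (i : 'I_k) (m : 'I_k -> nat) : R :=
  1 - 2^-1 * \sum_(x < n) q i x * \prod_(j < k) (1 - q j x) ^+ m j.

(* u_i(theta) = E[U_i(m)], m_j = floor theta_j + Bernoulli(frac theta_j),
   independent; the expectation written out as a finite sum over the set S
   of agents whose Bernoulli variable equals 1 *)
Definition u_cov k n (q : 'I_k -> 'I_n -> R) (i : 'I_k) (th : vec k) : R :=
  let fl := fun j => Num.truncn (th j) in
  let fr := fun j => th j - (fl j)%:R in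
  \sum_(S : {set 'I_k})
     (\prod_(j in S) fr j) * (\prod_(j in ~: S) (1 - fr j)) *
     U_cov q i (fun j => (fl j + (j \in S))%N).

Definition unif_dist k n (A : 'I_k -> {set 'I_n}) : 'I_k -> 'I_n -> R :=
  fun i x => if x \in A i then (#|A i|%:R)^-1 else 0.

Definition u_lin k (W : 'M[R]_k) (i : 'I_k) (th : vec k) : R :=
  \sum_(j < k) W i j * th j.

End CollabLearning.

(* Main.v *)
Require Import Defs.
From HB Require Import structures.
From mathcomp Require Import all_boot all_order all_algebra.
From mathcomp Require Import all_classical all_reals all_analysis.
From mathcomp Require Import ring lra zify.
Import Order.TTheory GRing.Theory Num.Theory.
Local Open Scope ring_scope.

Module G1.
Set Implicit Arguments. Unset Strict Implicit. Unset Printing Implicit Defensive.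
Import Order.TTheory GRing.Theory Num.Theory.
Local Open Scope ring_scope.

Section Gen.
Variable R : realType.

Definition psi (a t : R) : R :=
  (t - (Num.truncn t)%:R) * a ^+ (Num.truncn t).+1 +
  (1 - (t - (Num.truncn t)%:R)) * a ^+ Num.truncn t.

Lemma bernoulli (e : R) (n : nat) : 0 <= e <= 1 -> 1 - n%:R * e <= (1 - e) ^+ n.
Proof.
move=> /andP[e0 e1]; elim: n => [|n IH]; first by rewrite expr0 mul0r subr0.
rewrite exprS.
have h1 : 0 <= 1 - e by lra.
have := ler_wpM2l h1 IH.
rewrite -natr1. have n0 : 0 <= n%:R :> R by apply: ler0n. nra.
Qed.

Lemma psi_small a t : 0 <= t < 1 -> psi a t = 1 - (1 - a) * t.
Proof. rewrite /psi.
move=> /andP[t0 t1].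
have -> : Num.truncn t = 0%N by by apply: truncn_def; rewrite t0 /=.
rewrite /psi expr1 expr0 subr0 //=. ring.
Qed.

Lemma psi_ge0 a t : 0 <= a <= 1 -> 0 <= t -> 0 <= psi a t.
Proof.
move=> /andP[a0 a1] t0; have /andP[l u] := truncn_itv t0.
rewrite /psi; set n := Num.truncn t in l u *.
have hx : 0 <= a ^+ n by apply: exprn_ge0.
have hy : 0 <= a ^+ n.+1 by apply: exprn_ge0.
rewrite -natr1 in u.
apply: addr_ge0; apply: mulr_ge0; lra.
Qed.

Lemma psi_le1 a t : 0 <= a <= 1 -> 0 <= t -> psi a t <= 1.
Proof.
move=> /andP[a0 a1] t0; have /andP[l u] := truncn_itv t0.
rewrite /psi; set n := Num.truncn t in l u *.
have hx : a ^+ n <= 1 by apply: exprn_ile1.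
have hy : a ^+ n.+1 <= a ^+ n by rewrite exprS; have := exprn_ge0 n a0; nra.
have hx0 : 0 <= a ^+ n.+1 by apply: exprn_ge0.
rewrite -natr1 in u.
nra.
Qed.

Lemma psi1 t : psi 1 t = 1.
Proof. rewrite /psi !expr1n; ring. Qed.

Lemma psi_lb a t : 0 <= a <= 1 -> 0 <= t -> 1 - (1 - a) * t <= psi a t.
Proof.
move=> /andP[a0 a1] t0; have /andP[l u] := truncn_itv t0.
rewrite /psi; set n := Num.truncn t in l u *.
have B := @bernoulli (1 - a) n.
have : 0 <= 1 - a <= 1 by apply/andP; split; lra.
move=> /B; have -> : 1 - (1 - a) = a by ring. move=> hb.
rewrite exprS.
rewrite -natr1 in u.
set f := t - n%:R.
have f0 : 0 <= f by rewrite /f; lra.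
have f1 : f <= 1 by rewrite /f; lra.
have Z : 0 <= 1 - f * (1 - a) by nra.
have := ler_wpM2r Z hb.
have e : n%:R = t - f by rewrite /f; ring.
rewrite e => h.
have hh : (1 - (t - f) * (1 - a)) * (1 - f * (1 - a)) >= 1 - (1-a) * t.
  have n0 : 0 <= t - f by rewrite -e ler0n.
  have P : 0 <= (t - f) * f * ((1-a)*(1-a)) by apply: mulr_ge0; [apply: mulr_ge0 | apply: mulr_ge0]; lra.
  have -> : (1 - (t - f) * (1 - a)) * (1 - f * (1 - a)) = 1 - (1-a) * t + (t - f) * f * ((1-a)*(1-a)) by ring.
  lra.
nra.
Qed.

Lemma psi_mono a t t' : 0 <= a <= 1 -> 0 <= t -> t <= t' -> psi a t' <= psi a t.
Proof.
move=> /andP[a0 a1] t0 tt'.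
have t'0 : 0 <= t' by lra.
have /andP[l u] := truncn_itv t0; have /andP[l' u'] := truncn_itv t'0.
rewrite /psi; set n := Num.truncn t in l u *; set n' := Num.truncn t' in l' u' *.
rewrite -natr1 in u; rewrite -natr1 in u'.
have hx : 0 <= a ^+ n by apply: exprn_ge0.
have hx' : 0 <= a ^+ n' by apply: exprn_ge0.
case: (ltngtP n n') => [lt|gt|eq].
- have hle : a ^+ n' <= a ^+ n.+1 by apply: ler_wiXn2l.
  have h1 : a ^+ n'.+1 <= a ^+ n' by apply: ler_wiXn2l.
  have h2 : a ^+ n.+1 <= a ^+ n by apply: ler_wiXn2l.
  nra.
- exfalso. have : (n' + 1 <= n)%N by rewrite addn1. rewrite -(ler_nat R) natrD. lra.
- rewrite eq; have hy : 0 <= a ^+ n'.+1 by apply: exprn_ge0.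
  rewrite eq in l u. rewrite exprS.
  have P : 0 <= (t' - t) * ((1 - a) * a ^+ n') by apply: mulr_ge0; [lra| apply: mulr_ge0; lra].
  nra.
Qed.

End Gen.

End G1.
Import G1.

Module G2.
Set Implicit Arguments. Unset Strict Implicit. Unset Printing Implicit Defensive.
Import Order.TTheory GRing.Theory Num.Theory.
Local Open Scope ring_scope.

Lemma expand_prod (R : realType) k (F G : 'I_k -> R) (H : {set 'I_k} -> R) :
  (forall S : {set 'I_k}, H S = \prod_(j < k) (if j \in S then F j else G j)) ->
  \sum_(S : {set 'I_k}) H S = \prod_(j < k) (F j + G j).
Proof.
move=> hH; rewrite (@bigA_distr R 0 1 *%R +%R _ F G).
by apply: eq_bigr => S _; rewrite hH.
Qed.

Lemma u_cov_prod (R : realType) k n (q : 'I_k -> 'I_n -> R) i (th : vec R k) :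
  u_cov q i th = 1 - 2^-1 * \sum_(x < n) q i x * \prod_(j < k) psi (1 - q j x) (th j).
Proof.
rewrite /u_cov /U_cov /=.
set fl := fun j => Num.truncn (th j).
set fr := fun j => th j - (fl j)%:R.
set w := fun S : {set 'I_k} => (\prod_(j in S) fr j) * (\prod_(j in ~: S) (1 - fr j)).
have wE : forall S, w S = \prod_(j < k) (if j \in S then fr j else 1 - fr j).
  move=> S; rewrite /w (big_mkcond (fun j => j \in S)) (big_mkcond (fun j => j \in ~: S)) -big_split /=.
  apply: eq_bigr => j _; rewrite inE; case: (j \in S) => /=; ring.
have w1 : \sum_(S : {set 'I_k}) w S = 1.
  rewrite (expand_prod (F := fr) (G := fun j => 1 - fr j)) //.
  by rewrite big1 // => j _; ring.
have wx : forall x, \sum_(S : {set 'I_k}) w S * \prod_(j < k) (1 - q j x) ^+ (fl j + (j \in S))%N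
     = \prod_(j < k) psi (1 - q j x) (th j).
  move=> x; apply: expand_prod => S.
  rewrite wE -big_split /=; apply: eq_bigr => j _.
  case: (j \in S) => /=; rewrite ?addn1 ?addn0 /fr /fl //.
transitivity (\sum_(S : {set 'I_k}) w S * (1 - 2^-1 * \sum_(x < n) q i x * \prod_(j < k) (1 - q j x) ^+ (fl j + (j \in S))%N)); first by [].
rewrite (eq_bigr (fun S : {set 'I_k} => w S - 2^-1 * \sum_(x < n) q i x * (w S * \prod_(j < k) (1 - q j x) ^+ (fl j + (j \in S))%N))); last first.
  move=> S _; rewrite mulrBr mulr1; congr (_ - _).
  rewrite mulrCA; congr (_ * _); rewrite mulr_sumr; apply: eq_bigr => x _; ring.
rewrite big_split /= w1 sumrN -mulr_sumr exchange_big /=; congr (1 - 2^-1 * _).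
apply: eq_bigr => x _; rewrite -mulr_sumr wx //.
Qed.

End G2.
Import G2.

Module G3.
Set Implicit Arguments. Unset Strict Implicit. Unset Printing Implicit Defensive.
Import Order.TTheory GRing.Theory Num.Theory numFieldNormedType.Exports.
Local Open Scope ring_scope.

Lemma rder (R : realType) (g : R -> R) t d e : 0 < e ->
  (forall h, 0 < h < e -> g (t + h) - g t = d * h) -> rderiv_is g t d.
Proof.
move=> e0 H; rewrite /rderiv_is; apply: cvg_near_cst.
near=> h.
have h0 : 0 < h by near: h; exact: nbhs_right_gt.
have he : h < e by near: h; exact: nbhs_right_lt.
rewrite H ?h0 ?he // mulfK // gt_eqF //.
Unshelve. all: by end_near.
Qed.

Lemma lder (R : realType) (g : R -> R) t d e : 0 < e ->
  (forall h, - e < h < 0 -> g (t + h) - g t = d * h) -> lderiv_is g t d.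
Proof.
move=> e0 H; rewrite /lderiv_is; apply: cvg_near_cst.
near=> h.
have h0 : h < 0 by near: h; exact: nbhs_left_lt.
have he : - e < h by near: h; apply: nbhs_left_gt; rewrite oppr_lt0.
rewrite H ?h0 ?he // mulfK // lt_eqF //.
Unshelve. all: by end_near.
Qed.

End G3.
Import G3.

Module G4.
Set Implicit Arguments. Unset Strict Implicit. Unset Printing Implicit Defensive.
Import Order.TTheory GRing.Theory Num.Theory numFieldNormedType.Exports.
Local Open Scope ring_scope.

Section CovGen.
Variables (R : realType) (k n : nat) (q : 'I_k -> 'I_n -> R).
Hypothesis hq : forall j x, 0 <= q j x <= 2^-1.
Hypothesis hqs : forall i, \sum_(x < n) q i x = 1.

Lemma a_range j x : 0 <= 1 - q j x <= 1.
Proof. have /andP[a b] := hq j x; apply/andP; split; lra. Qed.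

Lemma ucov_ge i (th : vec R k) : inTheta th -> 2^-1 <= u_cov q i th.
Proof.
move=> hth; rewrite u_cov_prod.
have : \sum_(x < n) q i x * \prod_(j < k) psi (1 - q j x) (th j) <= 1.
  rewrite -[leRHS](hqs i); apply: ler_sum => x _.
  have /andP[q0 _] := hq i x.
  rewrite -[leRHS]mulr1; apply: ler_wpM2l => //.
  apply: prodr_ile1 => j _; apply/andP; split; [apply: psi_ge0|apply: psi_le1] => //; exact: a_range.
lra.
Qed.

Lemma ucov_mono i (th th' : vec R k) : inTheta th -> (forall j, th j <= th' j) ->
  u_cov q i th <= u_cov q i th'.
Proof.
move=> hth hle; rewrite !u_cov_prod.
suff : \sum_(x < n) q i x * \prod_(j < k) psi (1 - q j x) (th' j) <=
       \sum_(x < n) q i x * \prod_(j < k) psi (1 - q j x) (th j) by lra.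
apply: ler_sum => x _; have /andP[q0 _] := hq i x; apply: ler_wpM2l => //.
apply: ler_prod => j _; apply/andP; split.
  apply: psi_ge0; [exact: a_range| have := hth j; have := hle j; lra].
by apply: psi_mono => //; exact: a_range.
Qed.

Lemma ucov_small i (th : vec R k) : (forall j, 0 <= th j < 1) ->
  u_cov q i th = 1 - 2^-1 * \sum_(x < n) q i x * \prod_(j < k) (1 - q j x * th j).
Proof.
move=> h; rewrite u_cov_prod; congr (1 - 2^-1 * _); apply: eq_bigr => x _; congr (_ * _).
apply: eq_bigr => j _; rewrite psi_small //; ring.
Qed.

Definition Pp (th : vec R k) j x := \prod_(j' < k | j' != j) (1 - q j' x * th j').

Lemma ucov_affine i (th : vec R k) j tau : (forall l, 0 <= th l < 1) -> 0 <= tau < 1 ->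
  u_cov q i (upd th j tau) =
  (1 - 2^-1 * \sum_(x < n) q i x * Pp th j x) + (2^-1 * \sum_(x < n) q i x * q j x * Pp th j x) * tau.
Proof.
move=> hth ht; rewrite ucov_small; last first.
  by move=> l; rewrite /upd; case: (l == j).
have E : forall x, \prod_(j0 < k) (1 - q j0 x * upd th j tau j0) = (1 - q j x * tau) * Pp th j x.
  move=> x; rewrite (bigD1 j) //= /upd eqxx; congr (_ * _).
  by apply: eq_bigr => l /negPf ->.
under eq_bigr => x _ do rewrite E.
have S : \sum_(x < n) q i x * ((1 - q j x * tau) * Pp th j x) =
  \sum_(x < n) q i x * Pp th j x - (\sum_(x < n) q i x * q j x * Pp th j x) * tau.
  rewrite mulr_suml -sumrB; apply: eq_bigr => x _; ring.
rewrite S; ring.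
Qed.

Lemma Pp_bounds (th : vec R k) j x : (forall l, 0 <= th l < 1) ->
  2^-1 ^+ k <= Pp th j x <= 1.
Proof.
move=> hth; apply/andP; split.
  have -> : (2^-1 : R) ^+ k = \prod_(l < k) 2^-1 by rewrite prodr_const card_ord.
  rewrite /Pp [leRHS]big_mkcond /=; apply: ler_prod => l _.
  have /andP[a b] := hq l x; have /andP[c d] := hth l.
  case: (l != j); apply/andP; split; try lra.
  have : q l x * th l <= 2^-1 by nra. lra.
apply: prodr_ile1 => l _; have /andP[a b] := hq l x; have /andP[c d] := hth l.
apply/andP; split; nra.
Qed.

Lemma ucov_wb (vt : vec R k) : (forall j, 0 <= vt j < 1) ->
  (forall i, 0 < \sum_(x < n) q i x ^+ 2) -> well_behaved_on (u_cov q) vt.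
Proof.
move=> hvt hq2 i.
exists 1, (2^-1 * (2^-1 ^+ k * \sum_(x < n) q i x ^+ 2)); split; first lra.
split.
  apply: mulr_gt0; first lra. apply: mulr_gt0 => //; apply: exprn_gt0; lra.
move=> th hbox j.
have hth : forall l, 0 <= th l < 1.
  by move=> l; have /andP[a b] := hbox l; have /andP[c d] := hvt l; apply/andP; split; lra.
set beta := 2^-1 * \sum_(x < n) q i x * q j x * Pp th j x.
set alpha := 1 - 2^-1 * \sum_(x < n) q i x * Pp th j x.
have gE : forall tau, 0 <= tau < 1 -> u_cov q i (upd th j tau) = alpha + beta * tau.
  by move=> tau htau; rewrite ucov_affine.
have okb : if j == i then 2^-1 * (2^-1 ^+ k * \sum_(x < n) q i x ^+ 2) <= beta
           else 0 <= beta <= 1.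
  case: (eqVneq j i) => [eji|nji] /=.
    rewrite /beta eji; apply: ler_wpM2l; first lra.
    rewrite mulr_sumr; apply: ler_sum => x _.
    have /andP[p1 p2] := Pp_bounds i x hth.
    have q2 : 0 <= q i x ^+ 2 by apply: sqr_ge0.
    rewrite expr2 in q2 *. nra.
  apply/andP; split.
    rewrite /beta; apply: mulr_ge0; first lra.
    apply: sumr_ge0 => x _; have /andP[p1 p2] := Pp_bounds j x hth.
    have /andP[a b] := hq i x; have /andP[c d] := hq j x.
    have : 0 <= (2^-1 : R) ^+ k by apply: exprn_ge0; lra.
    move=> z; apply: mulr_ge0; [apply: mulr_ge0|]; lra.
  have : \sum_(x < n) q i x * q j x * Pp th j x <= 1.
    rewrite -[leRHS](hqs i); apply: ler_sum => x _.
    have /andP[p1 p2] := Pp_bounds j x hth.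
    have /andP[a b] := hq i x; have /andP[c d] := hq j x.
    have : 0 <= (2^-1 : R) ^+ k by apply: exprn_ge0; lra.
    move=> z.
    have : q j x * Pp th j x <= 1 by nra.
    nra.
  rewrite /beta; lra.
have t0 := hth j.
split.
  move=> lt; exists beta; split => //.
  apply: (@rder _ _ _ _ (1 - th j)); first by move: t0; lra.
  move=> h /andP[h0 h1].
  rewrite !gE; first ring.
  - by move: t0; lra.
  - apply/andP; split; lra.
move=> gt; exists beta; split => //.
apply: (@lder _ _ _ _ (th j)) => //.
move=> h /andP[h0 h1].
rewrite !gE; first ring.
- by move: t0; lra.
- apply/andP; split; lra.
Qed.

End CovGen.

End G4.
Import G4.

Module P1.
Set Implicit Arguments. Unset Strict Implicit. Unset Printing Implicit Defensive.
Import Order.TTheory GRing.Theory Num.Theory numFieldNormedType.Exports.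
Local Open Scope ring_scope.

Section Cov.
Variables (R : realType) (N : nat).
Local Notation D := N.+2.
Definition Ag := ('I_1 + 'I_D * 'I_D)%type.
Definition Pt := ('I_D + ('I_D * 'I_D) * 'I_D)%type.
Definition hub : Ag := inl ord0.
Definition leaf (b c : 'I_D) : Ag := inr (b, c).

Definition ptf (a : Ag) (r : 'I_D) : Pt :=
  match a with
  | inl _ => inl r
  | inr bc => if r == ord0 then inl bc.1 else inr (bc, r)
  end.

Lemma ptf_inj a : injective (ptf a).
Proof.
case: a => [u|bc] r r' /=; first by case.
case: (eqVneq r ord0) => [->|nr]; case: (eqVneq r' ord0) => [->|nr'] //=; by case.
Qed.

Definition K := #|{: Ag}|.
Definition Np := #|{: Pt}|.

Lemma K_val : K = (D * D).+1.
Proof. by rewrite /K card_sum card_prod !card_ord. Qed.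

Definition Aset (j : 'I_K) : {set 'I_Np} := [set enum_rank (ptf (enum_val j) r) | r : 'I_D].

Lemma card_Aset j : #|Aset j| = D.
Proof.
rewrite /Aset card_imset ?card_ord //.
by move=> r r' /enum_rank_inj /ptf_inj.
Qed.

Definition inS (a : Ag) (p : Pt) : bool := [exists r, ptf a r == p].

Lemma in_Aset j p : (enum_rank p \in Aset j) = inS (enum_val j) p.
Proof.
apply/imsetP/existsP => [[r _ /enum_rank_inj e]|[r /eqP e]]; first by exists r; rewrite e.
by exists r; rewrite ?e.
Qed.

Definition qq := unif_dist R Aset.
Local Notation Dr := (D%:R : R).

Lemma qqE j x : qq j x = if x \in Aset j then Dr^-1 else 0.
Proof. by rewrite /qq /unif_dist card_Aset. Qed.

Lemma Dr_gt0 : 0 < Dr. Proof. by rewrite ltr0n. Qed.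
Lemma Dr_ge2 : 2 <= Dr. Proof. by rewrite (ler_nat R 2). Qed.

Lemma qq_bounds j x : 0 <= qq j x <= 2^-1.
Proof.
rewrite qqE; case: (x \in Aset j); last by apply/andP; split; lra.
have h := Dr_ge2; apply/andP; split; first by rewrite invr_ge0; lra.
by rewrite lef_pV2 ?posrE; lra.
Qed.

Lemma qq_sum i : \sum_(x < Np) qq i x = 1.
Proof.
rewrite (eq_bigr (fun x => if x \in Aset i then Dr^-1 else 0)); last by move=> x _; rewrite qqE.
rewrite -big_mkcond /= sumr_const card_Aset -[_ *+ _]mulr_natr mulVf //.
Qed.

Lemma qq_sum2 i : 0 < \sum_(x < Np) qq i x ^+ 2.
Proof.
rewrite (eq_bigr (fun x => if x \in Aset i then Dr^-1 ^+ 2 else 0)); last first.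
  by move=> x _; rewrite qqE; case: (x \in Aset i); rewrite ?expr0n.
rewrite -big_mkcond /= sumr_const card_Aset -[_ *+ _]mulr_natr.
apply: mulr_gt0; first by apply: exprn_gt0; rewrite invr_gt0 Dr_gt0.
exact: Dr_gt0.
Qed.


Definition Psi (t : R) := psi (1 - Dr^-1) t.
Definition hI : 'I_K := enum_rank hub.
Definition lI b c : 'I_K := enum_rank (leaf b c).

Lemma sum_over_A (F : 'I_Np -> R) i :
  \sum_(x < Np) qq i x * F x = Dr^-1 * \sum_(r < D) F (enum_rank (ptf (enum_val i) r)).
Proof.
rewrite (eq_bigr (fun x => if x \in Aset i then Dr^-1 * F x else 0)); last first.
  by move=> x _; rewrite qqE; case: (x \in Aset i); rewrite ?mul0r.
rewrite -big_mkcond /= -mulr_sumr /Aset big_imset //.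
by move=> r r' _ _ /enum_rank_inj /ptf_inj.
Qed.

Lemma bij_er : {on [pred i | true], bijective (@enum_rank Ag)}.
Proof. exact: onW_bij (enum_rank_bij _). Qed.

Lemma prod_agents (G : 'I_K -> R) :
  \prod_(j < K) G j = G hI * \prod_(b < D) \prod_(c < D) G (lI b c).
Proof.
rewrite (reindex (@enum_rank Ag)) /=; last exact: bij_er.
rewrite big_sumType /= big_ord1; congr (_ * _).
by rewrite pair_big /=; apply: eq_bigr => -[b c].
Qed.

Lemma sum_agents (G : 'I_K -> R) :
  \sum_(j < K) G j = G hI + \sum_(b < D) \sum_(c < D) G (lI b c).
Proof.
rewrite (reindex (@enum_rank Ag)) /=; last exact: bij_er.
rewrite big_sumType /= big_ord1; congr (_ + _).
by rewrite pair_big /=; apply: eq_bigr => -[b c].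
Qed.

Lemma psi_q j p t : psi (1 - qq j (enum_rank p)) t = if inS (enum_val j) p then Psi t else 1.
Proof. by rewrite qqE in_Aset; case: inS; rewrite ?subr0 ?psi1. Qed.

Lemma inS_hub_inl b : inS hub (inl b).
Proof. by apply/existsP; exists b. Qed.

Lemma inS_leaf_inl b' c b : inS (leaf b' c) (inl b) = (b' == b).
Proof.
apply/existsP/eqP => [[r]|->]; last by exists ord0.
by rewrite /= ; case: (r == ord0) => //= /eqP [].
Qed.

Lemma inS_priv a b c r : r != ord0 -> inS a (inr ((b, c), r)) = (a == leaf b c).
Proof.
move=> nr; apply/existsP/eqP => [[r']|->]; last by exists r; rewrite /= (negPf nr).
case: a => [u|bc] //=; case: (r' == ord0) => //= /eqP [] -> _ //.
Qed.

Lemma F_hubpt (th : vec R K) b :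
  \prod_(j < K) psi (1 - qq j (enum_rank (inl b : Pt))) (th j) =
  Psi (th hI) * \prod_(c < D) Psi (th (lI b c)).
Proof.
rewrite prod_agents psi_q /hI enum_rankK inS_hub_inl; congr (_ * _).
rewrite (bigD1 b) //= [X in _ * X = _]big1 ?mulr1; last first.
  move=> b' nb; apply: big1 => c _; rewrite psi_q /lI enum_rankK inS_leaf_inl.
  by rewrite (negPf nb).
by apply: eq_bigr => c _; rewrite psi_q /lI enum_rankK inS_leaf_inl eqxx.
Qed.

Lemma F_priv (th : vec R K) b c r : r != ord0 ->
  \prod_(j < K) psi (1 - qq j (enum_rank (inr ((b, c), r) : Pt))) (th j) = Psi (th (lI b c)).
Proof.
move=> nr; rewrite (reindex (@enum_rank Ag)) /=; last exact: bij_er.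
rewrite (eq_bigr (fun a => if a == leaf b c then Psi (th (enum_rank a)) else 1)); last first.
  by move=> a _; rewrite psi_q enum_rankK inS_priv.
by rewrite -big_mkcond big_pred1_eq.
Qed.

Definition Term (th : vec R K) b c :=
  Psi (th hI) * \prod_(c' < D) Psi (th (lI b c')) + (N.+1)%:R * Psi (th (lI b c)).

Lemma u_leaf (th : vec R K) b c :
  u_cov qq (lI b c) th = 1 - 2^-1 * (Dr^-1 * Term th b c).
Proof.
rewrite u_cov_prod sum_over_A /lI enum_rankK big_ord_recl /=.
rewrite F_hubpt; congr (1 - 2^-1 * (Dr^-1 * (_ + _))).
rewrite (eq_bigr (fun _ => Psi (th (lI b c)))); last first.
  move=> r _; have nr : lift ord0 r != ord0 by rewrite eq_sym; exact: neq_lift.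
  by rewrite F_priv.
by rewrite sumr_const card_ord mulr_natl.
Qed.

End Cov.

End P1.
Import P1.

Module P2.
Set Implicit Arguments. Unset Strict Implicit. Unset Printing Implicit Defensive.
Import Order.TTheory GRing.Theory Num.Theory numFieldNormedType.Exports.
Local Open Scope ring_scope.

Lemma weier (R : realType) (I : Type) (r : seq I) (F : I -> R) :
  (forall i, 0 <= F i <= 1) -> 1 - \sum_(i <- r) (1 - F i) <= \prod_(i <- r) F i.
Proof.
move=> hF; elim: r => [|a r IH]; first by rewrite big_nil big_nil; lra.
rewrite !big_cons.
have S0 : 0 <= \sum_(i <- r) (1 - F i) by apply: sumr_ge0 => i _; have := hF i; lra.
have P0 : 0 <= \prod_(i <- r) F i by apply: prodr_ge0 => i _; have /andP[] := hF i.
have /andP[a0 a1] := hF a.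
nra.
Qed.

Ltac revR := repeat match goal with
  | H : is_true (_ <= _) |- _ => revert H
  | H : is_true (_ < _) |- _ => revert H
  | H : @eq _ _ _ |- _ => lazymatch type of H with (@eq nat _ _) => fail | _ => revert H end
  end.

Section Cov2.
Variables (R : realType) (N : nat).
Local Notation D := N.+2.
Local Notation Dr := (D%:R : R).
Local Notation M := (N.+1%:R : R).
Local Notation K := (K N).
Local Notation hI := (hI N).
Local Notation lI := (@lI N).
Local Notation Psi := (@Psi R N).
Local Notation Term := (@Term R N).
Ltac lraD := revR; try set z1 := (Dr^-1); try set z2 := M; try set z3 := Dr; intros; lra.
Ltac nraD := revR; try set z1 := (Dr^-1); try set z2 := M; try set z3 := Dr; intros; nra.

Lemma DrM : Dr = M + 1.
Proof. by rewrite -natr1. Qed.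

Lemma M_ge1 : 1 <= M. Proof. by rewrite (ler_nat R 1). Qed.

Lemma iD_range : 0 <= 1 - Dr^-1 <= 1.
Proof.
have h := Dr_ge2 R N; have hp : 0 < Dr^-1 by rewrite invr_gt0; lra.
have : Dr^-1 <= 2^-1 by rewrite lef_pV2 ?posrE; lra.
move=> h2; move: hp h2; set z := Dr^-1 => hp h2; apply/andP; split; lra.
Qed.

Lemma Psi_small t : 0 <= t < 1 -> Psi t = 1 - t / Dr.
Proof. by move=> h; rewrite /Psi psi_small //; ring. Qed.

Lemma Psi_01 t : 0 <= t -> 0 <= Psi t <= 1.
Proof. move=> h; apply/andP; split; [apply: psi_ge0|apply: psi_le1] => //; exact: iD_range. Qed.

Lemma Psi_lb t : 0 <= t -> 1 - t / Dr <= Psi t.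
Proof.
move=> h; have := psi_lb iD_range h; rewrite /Psi.
suff -> : 1 - (1 - (1 - Dr^-1)) * t = 1 - t / Dr by [].
ring.
Qed.

Lemma Dr_iD : Dr * Dr^-1 = 1.
Proof. by rewrite mulfV // gt_eqF // (Dr_gt0 R N). Qed.

Definition Sb (th : vec R K) b := \sum_(c < D) th (lI b c).

Lemma Term_lb (th : vec R K) b c : inTheta th ->
  1 - (th hI + Sb th b) / Dr + M * (1 - th (lI b c) / Dr) <= Term th b c.
Proof.
move=> hth; rewrite /Term.
have h1 : 1 - ((1 - Psi (th hI)) + \sum_(c' < D) (1 - Psi (th (lI b c')))) <=
          Psi (th hI) * \prod_(c' < D) Psi (th (lI b c')).
  have W : 1 - \sum_(c' < D) (1 - Psi (th (lI b c'))) <= \prod_(c' < D) Psi (th (lI b c')).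
    by apply: weier => i; exact: Psi_01 (hth _).
  have /andP[p0 p1] := Psi_01 (hth hI).
  have S0 : 0 <= \sum_(c' < D) (1 - Psi (th (lI b c'))).
    by apply: sumr_ge0 => i _; have /andP[] := Psi_01 (hth (lI b i)); lra.
  set P := \prod_(c' < D) Psi (th (lI b c')) in W *.
  set S := \sum_(c' < D) (1 - Psi (th (lI b c'))) in W S0 *.
  set p := Psi (th hI) in p0 p1 *.
  have H1 : 0 <= p * (P - (1 - S)) by apply: mulr_ge0; lra.
  have H2 : 0 <= (1 - p) * S by apply: mulr_ge0; lra.
  nra.
have h2 : \sum_(c' < D) (1 - Psi (th (lI b c'))) <= Sb th b / Dr.
  rewrite /Sb mulr_suml; apply: ler_sum => c' _; have := Psi_lb (hth (lI b c')).
  move: (th (lI b c')) => x; set z := Dr^-1; lra.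
have h3 := Psi_lb (hth hI).
have h4 := Psi_lb (hth (lI b c)).
have hM := M_ge1.
have : M * (1 - th (lI b c) / Dr) <= M * Psi (th (lI b c)) by apply: ler_wpM2l; [move: hM; set m := M; lra | exact: h4].
have e : (th hI + Sb th b) / Dr = th hI / Dr + Sb th b / Dr by rewrite mulrDl.
lraD.
Qed.

Variable delta : R.
Definition mul_ := 1 - 2^-1 * (Dr^-1 * (Dr - delta)).

Lemma feas_leaf (th : vec R K) b c :
  (mul_ <= u_cov (@qq R N) (lI b c) th) = (Term th b c <= Dr - delta).
Proof.
rewrite u_leaf /mul_.
have hp : 0 < Dr^-1 by rewrite invr_gt0 (Dr_gt0 R N).
apply/idP/idP => h.
  have : Dr^-1 * Term th b c <= Dr^-1 * (Dr - delta) by lraD.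
  by rewrite ler_pM2l.
have : Dr^-1 * Term th b c <= Dr^-1 * (Dr - delta) by rewrite ler_pM2l.
lraD.
Qed.

Lemma leaf_ineq (th : vec R K) b c : inTheta th -> mul_ <= u_cov (@qq R N) (lI b c) th ->
  Dr * delta <= th hI + Sb th b + M * th (lI b c).
Proof.
move=> hth; rewrite feas_leaf => h.
have := Term_lb b c hth.
set X := th hI + Sb th b; set L := th (lI b c).
move=> h2.
have : delta <= (X + M * L) / Dr.
  have e : (X + M * L) / Dr = X / Dr + M * (L / Dr) by rewrite mulrDl mulrA.
  rewrite e; rewrite DrM in h h2 *; lra.
rewrite ler_pdivlMr ?(Dr_gt0 R N) // => h3; lra.
Qed.

End Cov2.

End P2.
Import P2.

Module P3.
Set Implicit Arguments. Unset Strict Implicit. Unset Printing Implicit Defensive.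
Import Order.TTheory GRing.Theory Num.Theory numFieldNormedType.Exports.
Local Open Scope ring_scope.

Section Cov3.
Variables (R : realType) (N : nat).
Local Notation D := N.+2.
Local Notation Dr := (D%:R : R).
Local Notation M := (N.+1%:R : R).
Local Notation K := (K N).
Local Notation hI := (hI N).
Local Notation lI := (@lI N).
Local Notation Psi := (@Psi R N).
Local Notation Term := (@Term R N).
Local Notation qN := (@qq R N).
Local Notation uN := (u_cov qN).
Ltac lraD := revR; try set z1 := (Dr^-1); try set z2 := M; try set z3 := Dr; intros; lra.
Ltac nraD := revR; try set z1 := (Dr^-1); try set z2 := M; try set z3 := Dr; intros; nra.

Definition sm : R := ((Dr * Dr) * 4)^-1.
Definition t0 : R := Dr * sm.
Definition yy : R := 1 - sm.
Definition dl : R := Dr - yy ^+ D - M * yy.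

Lemma Dr2 : 2 <= Dr. Proof. exact: Dr_ge2. Qed.
Lemma DrM' : Dr = M + 1. Proof. exact: DrM. Qed.

Lemma sm_eq : Dr * Dr * sm * 4 = 1.
Proof.
rewrite /sm mulrAC mulfV //; have := Dr2; set z := Dr => h.
Qed.

Lemma sm_pos : 0 < sm.
Proof. rewrite /sm invr_gt0; have := Dr2; set z := Dr => h; nra. Qed.

Lemma sm_small : sm <= 16^-1.
Proof.
have := sm_eq; have := sm_pos; have := Dr2; set z := Dr => h1 h2 h3.
have : 16 * sm <= 1 by nra.
move=> h; have -> : (16^-1 : R) = 16^-1 * 1 by rewrite mulr1.
rewrite ler_pdivlMl; lra.
Qed.

Lemma t0_pos : 0 < t0.
Proof. rewrite /t0; apply: mulr_gt0; [have := Dr2; lra| exact: sm_pos]. Qed.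

Lemma t0_lt1 : t0 < 1.
Proof.
rewrite /t0; have := sm_eq; have := sm_pos; have := Dr2; set z := Dr => h1 h2 h3.
nra.
Qed.

Lemma yy_range : 0 <= yy < 1.
Proof. rewrite /yy; have := sm_pos; have := sm_small; move=> a b; apply/andP; split; lra. Qed.

Lemma yyD_le : yy ^+ D <= yy.
Proof.
have /andP[a b] := yy_range; rewrite exprS.
have : yy ^+ N.+1 <= 1 by apply: exprn_ile1; lra.
have : 0 <= yy ^+ N.+1 by apply: exprn_ge0.
nra.
Qed.

Lemma yyD_ge : 1 - Dr * sm <= yy ^+ D.
Proof.
have := @bernoulli R sm D; rewrite /yy; apply.
have := sm_pos; have := sm_small; move=> a b; apply/andP; split; lra.
Qed.

Lemma yyD_ge0 : 0 <= yy ^+ D.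
Proof. have /andP[a b] := yy_range; exact: exprn_ge0. Qed.

Lemma dl_pos : 0 < dl.
Proof.
rewrite /dl; have := yyD_le; have := yy_range; have := DrM'; have := M_ge1 R N.
move=> hM e /andP[a b] c.
have : 0 < M * (1 - yy) by apply: mulr_gt0; lra.
lraD.
Qed.

Lemma Ddl_small : Dr * dl <= 2^-1.
Proof.
rewrite /dl; have := yyD_ge; have := sm_eq; have := sm_pos; have := DrM'; have := M_ge1 R N.
rewrite /yy => hM e sp se yg.
have h1 : Dr - (1 - sm) ^+ D - M * (1 - sm) <= (Dr + M) * sm by rewrite e in yg *; lraD.
have h2 : Dr * (Dr - (1 - sm) ^+ D - M * (1 - sm)) <= Dr * ((Dr + M) * sm).
  by apply: ler_wpM2l => //; have := Dr2; lraD.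
have h3 : Dr * ((Dr + M) * sm) <= 2 * (Dr * Dr * sm).
  have : 0 <= Dr * sm by apply: mulr_ge0; [have := Dr2; lraD | lraD].
  rewrite e; nraD.
lraD.
Qed.

Lemma dl_lt1 : dl < 1.
Proof. have := Ddl_small; have := dl_pos; have := Dr2; set z := Dr => a b c; nra. Qed.

Lemma Ddl_lt1 : Dr * dl < 1.
Proof. have := Ddl_small; lra. Qed.

Definition mkv (h l : R) : vec R K := fun j => match enum_val j with inl _ => h | inr _ => l end.
Lemma mkv_hI h l : mkv h l hI = h. Proof. by rewrite /mkv /P1.hI enum_rankK. Qed.
Lemma mkv_lI h l b c : mkv h l (lI b c) = l. Proof. by rewrite /mkv /P1.lI enum_rankK. Qed.

Lemma agent_case (P : 'I_K -> Prop) : P hI -> (forall b c, P (lI b c)) -> forall i, P i.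
Proof.
move=> h1 h2 i; rewrite -(enum_valK i); case: (enum_val i) => [u|[b c]].
  by rewrite (ord1 u).
exact: h2.
Qed.

Lemma lI_eq b c b' c' : (lI b' c' == lI b c) = (b' == b) && (c' == c).
Proof. by rewrite /P1.lI (inj_eq enum_rank_inj) /leaf inj_eq ?xpair_eqE //; move=> x y []. Qed.

Lemma hI_lI b c : (hI == lI b c) = false.
Proof. by rewrite /P1.lI /P1.hI (inj_eq enum_rank_inj). Qed.
Lemma lI_hI b c : (lI b c == hI) = false.
Proof. by rewrite eq_sym hI_lI. Qed.

Lemma mkv_theta h l : 0 <= h -> 0 <= l -> inTheta (mkv h l).
Proof. by move=> a b; apply: agent_case => [|b' c']; rewrite ?mkv_hI ?mkv_lI. Qed.

Lemma Term_mkv h l b c : Term (mkv h l) b c = Psi h * Psi l ^+ D + M * Psi l.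
Proof.
rewrite /Term mkv_hI mkv_lI; congr (_ * _ + _).
by rewrite (eq_bigr (fun _ => Psi l)) ?prodr_const ?card_ord // => c' _; rewrite mkv_lI.
Qed.

Lemma Psi0 : Psi 0 = 1.
Proof. rewrite Psi_small ?mul0r ?subr0 //; lra. Qed.

Lemma Psi_t0 : Psi t0 = yy.
Proof.
have := t0_pos; have := t0_lt1 => a b.
rewrite Psi_small; last by apply/andP; split; lra.
rewrite /t0 /yy.
rewrite mulrC mulrA mulVf ?mul1r //; have := Dr2; lraD.
Qed.

Lemma Psi_Ddl : Psi (Dr * dl) = 1 - dl.
Proof.
have := Ddl_lt1; have := dl_pos; have := Dr2 => a b c.
rewrite Psi_small; last by apply/andP; split; [apply: mulr_ge0|]; lraD.
rewrite mulrC mulrA mulVf ?mul1r //; lraD.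
Qed.

End Cov3.

End P3.
Import P3.

Module P4.
Set Implicit Arguments. Unset Strict Implicit. Unset Printing Implicit Defensive.
Import Order.TTheory GRing.Theory Num.Theory numFieldNormedType.Exports.
Local Open Scope ring_scope.

Section Cov4.
Variables (R : realType) (N : nat).
Local Notation D := N.+2.
Local Notation Dr := (D%:R : R).
Local Notation M := (N.+1%:R : R).
Local Notation K := (K N).
Local Notation hI := (hI N).
Local Notation lI := (@lI N).
Local Notation Psi := (@Psi R N).
Local Notation Term := (@Term R N).
Local Notation qN := (@qq R N).
Local Notation uN := (u_cov qN).
Local Notation dl := (dl R N).
Local Notation yy := (yy R N).
Local Notation t0 := (t0 R N).
Local Notation mkv := (@mkv R N).
Local Notation Sb := (@Sb R N).
Ltac lraD := revR; try set z1 := (Dr^-1); try set z2 := M; try set z3 := Dr; intros; lra.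
Ltac nraD := revR; try set z1 := (Dr^-1); try set z2 := M; try set z3 := Dr; intros; nra.

Definition muA : 'I_K -> R := fun j => match enum_val j with inl _ => 0 | inr _ => mul_ N dl end.
Lemma muA_hI : muA hI = 0. Proof. by rewrite /muA /P1.hI enum_rankK. Qed.
Lemma muA_lI b c : muA (lI b c) = mul_ N dl. Proof. by rewrite /muA /P1.lI enum_rankK. Qed.

Lemma hub_ok (th : vec R K) : inTheta th -> muA hI <= uN hI th.
Proof.
move=> h; rewrite muA_hI; apply: le_trans (ucov_ge (@qq_bounds R N) (@qq_sum R N) _ h).
lra.
Qed.

Lemma feasE (th : vec R K) : inTheta th -> (forall b c, Term th b c <= Dr - dl) ->
  feasible uN muA th.
Proof.
move=> h1 h2; split => //; apply: agent_case; first exact: hub_ok.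
by move=> b c; rewrite muA_lI feas_leaf.
Qed.

Lemma feas_ineq (th : vec R K) : feasible uN muA th ->
  forall b c, Dr * dl <= th hI + Sb th b + M * th (lI b c).
Proof. by move=> [h1 h2] b c; apply: leaf_ineq => //; rewrite -(muA_lI b c). Qed.

Lemma costE (th : vec R K) : cost th = th hI + \sum_(b < D) Sb th b.
Proof. by rewrite /cost sum_agents. Qed.

Lemma Sb_ge0 (th : vec R K) b : inTheta th -> 0 <= Sb th b.
Proof. by move=> h; apply: sumr_ge0. Qed.

Lemma L_le_S (th : vec R K) b c : inTheta th -> th (lI b c) <= Sb th b.
Proof.
move=> h; rewrite /P2.Sb (bigD1 c) //=.
have : 0 <= \sum_(i < D | i != c) th (lI b i) by apply: sumr_ge0.
lra.
Qed.

Lemma sum_c (th : vec R K) b (T : R) :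
  \sum_(c < D) (T + Sb th b + M * th (lI b c)) = (T + Sb th b) * Dr + M * Sb th b.
Proof.
by rewrite big_split /= sumr_const card_ord -mulr_sumr mulr_natr.
Qed.

Definition optv := mkv (Dr * dl) 0.

Lemma optv_feas : feasible uN muA optv.
Proof.
apply: feasE.
  apply: mkv_theta; last lra.
  by apply: mulr_ge0; [have := Dr_ge2 R N; lra | have := dl_pos R N; lra].
move=> b c; rewrite Term_mkv Psi_Ddl Psi0 expr1n mulr1 mulr1 DrM.
lraD.
Qed.

Lemma cost_optv : cost optv = Dr * dl.
Proof.
rewrite costE /optv mkv_hI big1 ?addr0 // => b _; rewrite /P2.Sb big1 // => c _.
by rewrite mkv_lI.
Qed.

Lemma opt_lb (th : vec R K) : feasible uN muA th -> Dr * dl <= cost th.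
Proof.
move=> hf; have [hth _] := hf.
have H : forall b : 'I_D, Dr * dl <= th hI + Dr * Sb th b.
  move=> b; have := feas_ineq hf b ord0; have := L_le_S b ord0 hth.
  move=> hl; have : M * th (lI b ord0) <= M * Sb th b by apply: ler_wpM2l => //; have := M_ge1 R N; lraD.
  rewrite DrM mulrDl mul1r; lraD.
have : \sum_(b < D) (Dr * dl) <= \sum_(b < D) (th hI + Dr * Sb th b) by apply: ler_sum.
rewrite big_split /= !sumr_const card_ord -mulr_sumr -[(Dr * dl) *+ _]mulr_natr -[(th hI) *+ _]mulr_natr costE.
have := Dr_ge2 R N; have := hth hI.
set S := \sum_(b < D) Sb th b => a b c.
have : Dr * (Dr * dl) <= Dr * (th hI + S) by lraD.
rewrite ler_pM2l //; lraD.
Qed.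

Lemma optv_opt : socially_optimal uN muA optv.
Proof. split; first exact: optv_feas. by move=> th h; rewrite cost_optv; apply: opt_lb. Qed.

Lemma sqrtK : Num.sqrt (K%:R : R) <= 2 * Dr.
Proof.
have h : (K%:R : R) <= (2 * Dr) ^+ 2.
  have -> : (2 * Dr) ^+ 2 = ((2 * D) ^ 2)%:R :> R by rewrite natrX natrM.
  rewrite K_val ler_nat; lia.
have h0 : 0 <= 2 * Dr by have := Dr_ge2 R N; lra.
by rewrite -(ler_sqrt _ (sqr_ge0 _)) sqrtr_sqr ger0_norm in h.
Qed.

Lemma final_bound (th : vec R K) : inTheta th -> (forall b, Dr * dl <= 2 * Sb th b) ->
  4^-1 * Num.sqrt (K%:R) <= cost th / cost optv.
Proof.
move=> hth hb; rewrite cost_optv.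
have dp := dl_pos R N; have D2 := Dr_ge2 R N.
have hp : 0 < Dr * dl by apply: mulr_gt0; lra.
rewrite ler_pdivlMr //.
have : \sum_(b < D) (Dr * dl) <= \sum_(b < D) (2 * Sb th b) by apply: ler_sum.
rewrite sumr_const card_ord -mulr_sumr -[(Dr * dl) *+ _]mulr_natr costE => hs.
have := hth hI; have := sqrtK; have := sqrtr_ge0 (K%:R : R).
set S := \sum_(b < D) Sb th b; set q := Num.sqrt _.
move=> q0 qle T0.
have A : q * (Dr * dl) <= (2 * Dr) * (Dr * dl) by apply: ler_wpM2r; lra.
have B : (2 * Dr) * (Dr * dl) = 2 * ((Dr * dl) * Dr) by ring.
rewrite -mulrA ler_pdivrMl; last lra.
move: A hs; rewrite B -/S; set W := (Dr * dl) * Dr; set V := q * (Dr * dl); lra.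
Qed.

End Cov4.

End P4.
Import P4.

Module P5.
Set Implicit Arguments. Unset Strict Implicit. Unset Printing Implicit Defensive.
Import Order.TTheory GRing.Theory Num.Theory numFieldNormedType.Exports.
Local Open Scope ring_scope.

Section Cov5.
Variables (R : realType) (N : nat).
Local Notation D := N.+2.
Local Notation Dr := (D%:R : R).
Local Notation M := (N.+1%:R : R).
Local Notation K := (K N).
Local Notation hI := (hI N).
Local Notation lI := (@lI N).
Local Notation Psi := (@Psi R N).
Local Notation Term := (@Term R N).
Local Notation qN := (@qq R N).
Local Notation uN := (u_cov qN).
Local Notation dl := (dl R N).
Local Notation yy := (yy R N).
Local Notation t0 := (t0 R N).
Local Notation mkv := (@mkv R N).
Local Notation Sb := (@Sb R N).
Local Notation muA := (@muA R N).
Ltac lraD := revR; try set z1 := (Dr^-1); try set z2 := M; try set z3 := Dr; intros; lra.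

Lemma upd_hI_l (th : vec R K) b c x : upd th (lI b c) x hI = th hI.
Proof. by rewrite /upd hI_lI. Qed.
Lemma upd_lI_l (th : vec R K) b c x c' :
  upd th (lI b c) x (lI b c') = if c' == c then x else th (lI b c').
Proof. by rewrite /upd lI_eq eqxx. Qed.
Lemma swap_hI (th : vec R K) b c : swapv th (lI b c) hI hI = th (lI b c).
Proof. by rewrite /swapv hI_lI eqxx. Qed.
Lemma swap_lI (th : vec R K) b c c' :
  swapv th (lI b c) hI (lI b c') = if c' == c then th hI else th (lI b c').
Proof. by rewrite /swapv lI_eq eqxx /= lI_hI; case: (c' == c). Qed.

Lemma swap_theta (th : vec R K) i j : inTheta th -> inTheta (swapv th i j).
Proof. by move=> h l; rewrite /swapv; case: (l == i); case: (l == j). Qed.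
Lemma upd_theta (th : vec R K) i x : inTheta th -> 0 <= x -> inTheta (upd th i x).
Proof. by move=> h hx l; rewrite /upd; case: (l == i). Qed.

Lemma yy_bounds : 0 <= yy < 1. Proof. exact: yy_range. Qed.

Lemma Psi_t0' : Psi t0 = yy. Proof. exact: Psi_t0. Qed.

Definition eqv := mkv 0 t0.

Lemma eqv_theta : inTheta eqv.
Proof. apply: mkv_theta; [lra | have := t0_pos R N; lra]. Qed.

Lemma eqv_feas : feasible uN muA eqv.
Proof.
apply: feasE; first exact: eqv_theta.
move=> b c; rewrite Term_mkv Psi0 Psi_t0 mul1r /P3.dl; lra.
Qed.

Lemma prod_ge_yy (F : 'I_D -> R) : (forall c, yy <= F c) -> yy ^+ D <= \prod_(c < D) F c.
Proof.
move=> h; have -> : yy ^+ D = \prod_(c < D) yy by rewrite prodr_const card_ord.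
apply: ler_prod => c _; rewrite h andbT; have /andP[] := yy_range R N; done.
Qed.

Lemma eqv_stable : stable_eq uN muA eqv.
Proof.
split; first exact: eqv_feas.
move=> [i [x [hx [hT hmu]]]]; move: i x hx hT hmu; apply: agent_case.
  move=> x; rewrite /eqv mkv_hI => hx hT; have := hT hI; rewrite /upd eqxx; lra.
move=> b c x; rewrite /eqv mkv_lI => hx hT; rewrite muA_lI feas_leaf.
have x0 : 0 <= x by have := hT (lI b c); rewrite /upd eqxx.
have t1 := t0_lt1 R N.
rewrite /Term upd_hI_l mkv_hI Psi0 mul1r; under eq_bigr => c' _ do rewrite upd_lI_l; rewrite upd_lI_l eqxx.
have hPx : yy < Psi x.
  rewrite -Psi_t0 !Psi_small; last (apply/andP; split; lra); last first.
    have := t0_pos R N; move=> ?; apply/andP; split; lra.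
  have : x / Dr < t0 / Dr by rewrite ltr_pM2r // invr_gt0 (Dr_gt0 R N).
  lraD.
have hP : yy ^+ D <= \prod_(c' < D) Psi (if c' == c then x else mkv 0 t0 (lI b c')).
  apply: prod_ge_yy => c'; case: (c' == c); rewrite ?mkv_lI ?Psi_t0; lra.
have hM := M_ge1 R N.
have : M * yy < M * Psi x by rewrite ltr_pM2l //; lra.
rewrite /P3.dl; lraD.
Qed.

Lemma eqv_envy : envy_free uN muA eqv.
Proof.
split; first exact: eqv_feas.
move=> [i [j [hlt [hT hmu]]]]; move: i j hlt hT hmu; apply: agent_case.
  move=> j; rewrite /eqv mkv_hI; have := eqv_theta j; rewrite /eqv; lra.
move=> b c; apply: agent_case; last first.
  by move=> b' c'; rewrite /eqv !mkv_lI; lra.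
move=> _ _; rewrite muA_lI feas_leaf /Term swap_hI.
under eq_bigr => c' _ do rewrite swap_lI.
rewrite swap_lI eqxx /eqv mkv_hI mkv_lI Psi0 Psi_t0.
have /andP[y0 y1] := yy_range R N.
have hP : yy ^+ D <= \prod_(c' < D) Psi (if c' == c then 0 else mkv 0 t0 (lI b c')).
  apply: prod_ge_yy => c'; case: (c' == c); rewrite ?mkv_lI ?mkv_hI ?Psi_t0 ?Psi0; lra.
have := yyD_le R N; have := yyD_ge0 R N => a b'.
have hM := M_ge1 R N.
have : yy * yy ^+ D <= yy * \prod_(c' < D) Psi (if c' == c then 0 else mkv 0 t0 (lI b c')).
  by apply: ler_wpM2l.
have : 0 < (M - yy ^+ D) * (1 - yy) by apply: mulr_gt0; lraD.
have e : (M - yy ^+ D) * (1 - yy) = M - M * yy - yy ^+ D + yy * yy ^+ D by ring.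
rewrite e /P3.dl; lraD.
Qed.

End Cov5.

End P5.
Import P5.

Module P6.
Set Implicit Arguments. Unset Strict Implicit. Unset Printing Implicit Defensive.
Import Order.TTheory GRing.Theory Num.Theory numFieldNormedType.Exports.
Local Open Scope ring_scope.

Section Cov6.
Variables (R : realType) (N : nat).
Local Notation D := N.+2.
Local Notation Dr := (D%:R : R).
Local Notation M := (N.+1%:R : R).
Local Notation K := (K N).
Local Notation hI := (hI N).
Local Notation lI := (@lI N).
Local Notation Psi := (@Psi R N).
Local Notation Term := (@Term R N).
Local Notation qN := (@qq R N).
Local Notation uN := (u_cov qN).
Local Notation dl := (dl R N).
Local Notation yy := (yy R N).
Local Notation t0 := (t0 R N).
Local Notation mkv := (@mkv R N).
Local Notation Sb := (@Sb R N).
Local Notation muA := (@muA R N).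
Ltac lraD := revR; try set z1 := (Dr^-1); try set z2 := M; try set z3 := Dr; intros; lra.

Lemma sum_feas (th : vec R K) b : feasible uN muA th ->
  Dr * dl * Dr <= (th hI + Sb th b) * Dr + M * Sb th b.
Proof.
move=> hf.
have : \sum_(c < D) (Dr * dl) <= \sum_(c < D) (th hI + Sb th b + M * th (lI b c)).
  by apply: ler_sum => c _; apply: feas_ineq.
by rewrite sum_c sumr_const card_ord -[(Dr * dl) *+ _]mulr_natr.
Qed.

Lemma cancel_Dr (a b : R) : a * Dr <= b * Dr -> a <= b.
Proof. by rewrite ler_pM2r // (Dr_gt0 R N). Qed.

Lemma stable_T0 (th : vec R K) : stable_eq uN muA th -> th hI = 0.
Proof.
move=> [[hth hmu] hno]; have := hth hI; rewrite le_eqVlt => /orP[/eqP <- //|hp].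
exfalso; apply: hno; exists hI, 0; split => //; split.
  by apply: upd_theta => //.
by apply: hub_ok; apply: upd_theta.
Qed.

Lemma stable_lb (th : vec R K) b : stable_eq uN muA th -> Dr * dl <= 2 * Sb th b.
Proof.
move=> hs; have T0 := stable_T0 hs; have [[hth _] _] := hs.
have := sum_feas b hs.1; rewrite T0 add0r.
have S0 := Sb_ge0 b hth; have hM := M_ge1 R N.
have : M * Sb th b <= Dr * Sb th b by apply: ler_wpM2r => //; rewrite DrM; lraD.
move=> h1 h2; apply: cancel_Dr.
have e : 2 * Sb th b * Dr = Sb th b * Dr + Dr * Sb th b by ring.
rewrite e; lraD.
Qed.

Lemma envy_T (th : vec R K) b c : envy_free uN muA th -> th hI <= th (lI b c).
Proof.
move=> [[hth hmu] hno]; rewrite leNgt; apply/negP => hlt.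
apply: hno; exists hI, (lI b c); split => //; split; first exact: swap_theta.
by apply: hub_ok; apply: swap_theta.
Qed.

Lemma envy_lb (th : vec R K) b : envy_free uN muA th -> Dr * dl <= 2 * Sb th b.
Proof.
move=> he; have [[hth _] _] := he.
have H := sum_feas b he.1.
have : \sum_(c < D) th hI <= \sum_(c < D) th (lI b c) by apply: ler_sum => c _; apply: envy_T.
rewrite sumr_const card_ord -[(th hI) *+ _]mulr_natr => hT.
apply: cancel_Dr.
move: H hT; rewrite DrM.
set T := th hI; set S := Sb th b; set m := M; set w := dl.
have e1 : (T + S) * (m + 1) + m * S = T * (m + 1) + S * (2 * m + 1) by ring.
have e2 : 2 * S * (m + 1) = S + S * (2 * m + 1) by ring.
have hS : \sum_(c < D) th (lI b c) = S by []. rewrite e1 e2 hS; lra.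
Qed.

Definition vtv := mkv 0 dl.

Lemma vtv_ok i : 0 <= vtv i /\ muA i <= uN i (upd (fun _ => 0) i (vtv i)).
Proof.
have d0 := dl_pos R N; have d1 := dl_lt1 R N.
move: i; apply: agent_case.
  rewrite /vtv mkv_hI; split => //; apply: hub_ok; apply: upd_theta => //.
move=> b c; rewrite /vtv mkv_lI; split; first lra.
rewrite muA_lI feas_leaf /Term upd_hI_l Psi0 mul1r.
under eq_bigr => c' _ do rewrite upd_lI_l.
rewrite upd_lI_l eqxx (bigD1 c) //= eqxx big1 ?mulr1; last first.
  by move=> c' /negPf ->; rewrite Psi0.
rewrite Psi_small; last (apply/andP; split; lra).
have e : (1 - dl / Dr) + M * (1 - dl / Dr) = (M + 1) * (1 - dl / Dr) by ring.
rewrite e -DrM mulrBr mulr1 mulrCA mulfV ?mulr1 //; have := Dr_gt0 R N; lra.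
Qed.

Lemma wbA : wb_clp uN muA.
Proof.
split.
  by move=> i th th' h1 h2; apply: ucov_mono => //; [exact: qq_bounds].
exists vtv; split; first exact: vtv_ok.
apply: ucov_wb; [exact: qq_bounds| exact: qq_sum | | exact: qq_sum2].
have d0 := dl_pos R N; have d1 := dl_lt1 R N.
by apply: agent_case => [|b c]; rewrite /vtv ?mkv_hI ?mkv_lI; apply/andP; split; lra.
Qed.

Lemma PoS_A : PoS_at_least uN muA (4^-1 * Num.sqrt (K%:R)).
Proof.
exists (@optv R N); split; first exact: optv_opt.
split; first by rewrite cost_optv; apply: mulr_gt0; [have := Dr_gt0 R N|have := dl_pos R N].
split; first by exists (@eqv R N); exact: eqv_stable.
move=> th hs; apply: final_bound; first by case: hs => -[].
by move=> b; apply: stable_lb.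
Qed.

Lemma PoF_A : PoF_at_least uN muA (4^-1 * Num.sqrt (K%:R)).
Proof.
exists (@optv R N); split; first exact: optv_opt.
split; first by rewrite cost_optv; apply: mulr_gt0; [have := Dr_gt0 R N|have := dl_pos R N].
split; first by exists (@eqv R N); exact: eqv_envy.
move=> th he; apply: final_bound; first by case: he => -[].
by move=> b; apply: envy_lb.
Qed.

End Cov6.

End P6.
Import P6.

Module L1.
Set Implicit Arguments. Unset Strict Implicit. Unset Printing Implicit Defensive.
Import Order.TTheory GRing.Theory Num.Theory numFieldNormedType.Exports.
Local Open Scope ring_scope.

Section Lin.
Variables (R : realType) (N : nat).
Local Notation D := N.+2.
Local Notation Dr := (D%:R : R).
Local Notation M := (N.+1%:R : R).
Local Notation K := (K N).
Local Notation hI := (hI N).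
Local Notation lI := (@lI N).
Ltac lraD := revR; try set z1 := (Dr^-1); try set z2 := M; try set z3 := Dr; intros; lra.

Definition Wf (i j : 'I_K) : R := if j == i then 1 else if j == hI then Dr^-1 else 0.
Definition WL : 'M[R]_K := \matrix_(i, j) Wf i j.
Local Notation uL := (u_lin WL).
Definition muL (i : 'I_K) : R := if i == hI then 0 else 1.

Lemma iD_pos : 0 < Dr^-1. Proof. by rewrite invr_gt0 (Dr_gt0 R N). Qed.
Lemma iD_le : Dr^-1 <= 2^-1.
Proof. have h := Dr_ge2 R N; by rewrite lef_pV2 ?posrE; lraD. Qed.

Lemma WL_bounds i j : 0 <= WL i j <= 1.
Proof.
have := iD_pos; have := iD_le; move=> a b.
rewrite mxE /Wf; case: (j == i); first (apply/andP; split; lraD).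
case: (j == hI); apply/andP; split; lraD.
Qed.

Lemma WL_diag i : WL i i = 1. Proof. by rewrite mxE /Wf eqxx. Qed.

Lemma WL_off i j : i != j -> WL i j <= Dr^-1.
Proof.
move=> nij; have := iD_pos; move=> a; rewrite mxE /Wf eq_sym (negPf nij).
case: (j == hI); lraD.
Qed.

Lemma uL_upd i (th : vec R K) j t :
  uL i (upd th j t) = WL i j * t + \sum_(l < K | l != j) WL i l * th l.
Proof.
rewrite /u_lin (bigD1 j) //= /upd eqxx; congr (_ + _).
by apply: eq_bigr => l /negPf ->.
Qed.

Lemma uL_hub (th : vec R K) : uL hI th = th hI.
Proof.
rewrite /u_lin (bigD1 hI) //= big1 ?addr0; first by rewrite WL_diag mul1r.
by move=> l nl; rewrite mxE /Wf (negPf nl) mul0r.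
Qed.

Lemma uL_leaf (th : vec R K) b c : uL (lI b c) th = th (lI b c) + Dr^-1 * th hI.
Proof.
rewrite /u_lin (bigD1 (lI b c)) //= WL_diag mul1r; congr (_ + _).
rewrite (bigD1 hI) /=; last by rewrite hI_lI.
rewrite mxE /Wf hI_lI eqxx big1 ?addr0 // => l /andP[n1 n2].
by rewrite mxE /Wf (negPf n1) (negPf n2) mul0r.
Qed.

Lemma muL_hI : muL hI = 0. Proof. by rewrite /muL eqxx. Qed.
Lemma muL_lI b c : muL (lI b c) = 1. Proof. by rewrite /muL lI_hI. Qed.

Lemma wbL : wb_clp uL muL.
Proof.
split.
  move=> i th th' h1 h2; rewrite /u_lin; apply: ler_sum => j _.
  by apply: ler_wpM2l; [have /andP[] := WL_bounds i j|].
exists (fun i => if i == hI then 0 else 1); split.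
  apply: agent_case; first by rewrite eqxx muL_hI uL_hub /upd eqxx.
  move=> b c; rewrite lI_hI muL_lI uL_leaf /upd eqxx hI_lI; split; lraD.
move=> i; exists 1, 1; split; first lraD; split; first lraD.
move=> th _ j g ok.
have gE : forall t h, g (t + h) - g t = WL i j * h.
  by move=> t h; rewrite /g !uL_upd; ring.
have okW : ok (WL i j).
  rewrite /ok; case: (eqVneq j i) => [->|nji] /=; first by rewrite WL_diag.
  exact: WL_bounds.
split => _; exists (WL i j); split => //.
  by apply: (@rder _ _ _ _ 1) => // h _; rewrite gE.
by apply: (@lder _ _ _ _ 1) => // h _; rewrite gE.
Qed.

End Lin.

End L1.
Import L1.

Module L2.
Set Implicit Arguments. Unset Strict Implicit. Unset Printing Implicit Defensive.
Import Order.TTheory GRing.Theory Num.Theory numFieldNormedType.Exports.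
Local Open Scope ring_scope.

Section Lin2.
Variables (R : realType) (N : nat).
Local Notation D := N.+2.
Local Notation Dr := (D%:R : R).
Local Notation M := (N.+1%:R : R).
Local Notation K := (K N).
Local Notation hI := (hI N).
Local Notation lI := (@lI N).
Local Notation mkv := (@mkv R N).
Local Notation Sb := (@Sb R N).
Local Notation uL := (u_lin (WL R N)).
Local Notation muL := (@muL R N).
Ltac lraD := revR; try set z1 := (Dr^-1); try set z2 := M; try set z3 := Dr; intros; lra.

Lemma feasL (th : vec R K) : inTheta th -> (forall b c, 1 <= th (lI b c) + Dr^-1 * th hI) ->
  feasible uL muL th.
Proof.
move=> h1 h2; split => //; apply: agent_case; first by rewrite muL_hI uL_hub.
by move=> b c; rewrite muL_lI uL_leaf.
Qed.

Lemma feasL_ineq (th : vec R K) b c : feasible uL muL th -> 1 <= th (lI b c) + Dr^-1 * th hI.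
Proof. by move=> [_ h]; have := h (lI b c); rewrite muL_lI uL_leaf. Qed.

Definition optL := mkv Dr 0.
Definition eqL := mkv 0 1.

Lemma sumD (x : R) : \sum_(b < D) x = x * Dr.
Proof. by rewrite sumr_const card_ord mulr_natr. Qed.

Lemma sum_lb (a : R) (f : 'I_D -> R) : (forall b, a <= f b) -> a * Dr <= \sum_(b < D) f b.
Proof. by move=> h; rewrite -sumD; apply: ler_sum => b _; exact: h. Qed.

Lemma Dr_pos : 0 < Dr. Proof. exact: Dr_gt0. Qed.

Lemma optL_feas : feasible uL muL optL.
Proof.
apply: feasL; first by apply: mkv_theta; [have := Dr_pos; lraD | lraD].
by move=> b c; rewrite /optL mkv_lI mkv_hI mulVf ?add0r // gt_eqF // Dr_pos.
Qed.

Lemma cost_optL : cost optL = Dr.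
Proof.
rewrite costE /optL mkv_hI big1 ?addr0 // => b _; rewrite /P2.Sb big1 // => c _.
by rewrite mkv_lI.
Qed.

Lemma optL_lb (th : vec R K) : feasible uL muL th -> Dr <= cost th.
Proof.
move=> hf; have hth := hf.1.
have H : forall b : 'I_D, Dr <= Sb th b + th hI.
  move=> b; have : \sum_(c < D) (1 : R) <= \sum_(c < D) (th (lI b c) + Dr^-1 * th hI).
    by apply: ler_sum => c _; apply: feasL_ineq.
  rewrite big_split /= !sumr_const card_ord -[(Dr^-1 * th hI) *+ _]mulr_natr.
  rewrite mulrAC mulVf ?mul1r; last by rewrite gt_eqF // Dr_pos.
  done.
have hsum : Dr * Dr <= \sum_(b < D) Sb th b + th hI * Dr.
  by have := sum_lb H; rewrite big_split sumD.
rewrite costE.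
have S0 : 0 <= \sum_(b < D) Sb th b by apply: sumr_ge0 => b _; apply: Sb_ge0.
have hT := hth hI; have D2 := Dr_ge2 R N.
move: hsum; set S := \sum_(b < D) Sb th b => h.
apply: (@cancel_Dr R N).
have : S <= S * Dr by rewrite -[X in X <= _]mulr1; apply: ler_wpM2l => //; lraD.
rewrite (mulrDl (th hI) S Dr); move: h.
set T := th hI; lraD.
Qed.

Lemma optL_opt : socially_optimal uL muL optL.
Proof. split; first exact: optL_feas. by move=> th h; rewrite cost_optL; apply: optL_lb. Qed.

Lemma finalL (th : vec R K) : inTheta th -> (forall b c, 2^-1 <= th (lI b c)) ->
  4^-1 * Num.sqrt (K%:R) <= cost th / cost optL.
Proof.
move=> hth hL; rewrite cost_optL ler_pdivlMr ?Dr_pos // costE.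
have H : forall b, 2^-1 * Dr <= Sb th b by move=> b; apply: sum_lb => c; exact: hL.
have H2 := sum_lb H.
have := sqrtK R N; have := sqrtr_ge0 (K%:R : R); have := hth hI; have := Dr_pos.
move: H2; set S := \sum_(b < D) Sb th b; set q := Num.sqrt _; set T := th hI.
move=> H2 a b c d.
have : q * Dr <= 2 * Dr * Dr by apply: ler_wpM2r; lraD.
move: H2; set z := Dr; lra.
Qed.

Lemma stable_L (th : vec R K) : stable_eq uL muL th -> forall b c, 2^-1 <= th (lI b c).
Proof.
move=> [hf hno].
have T0 : th hI = 0.
  have := hf.1 hI; rewrite le_eqVlt => /orP[/eqP <- //|hp].
  exfalso; apply: hno; exists hI, 0; split => //; split; first by apply: upd_theta => //; exact: hf.1.
  by rewrite muL_hI uL_hub /upd eqxx.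
move=> b c; have := feasL_ineq b c hf; rewrite T0 mulr0 addr0; lraD.
Qed.

Lemma envy_L (th : vec R K) : envy_free uL muL th -> forall b c, 2^-1 <= th (lI b c).
Proof.
move=> [hf hno] b c.
have hT : th hI <= th (lI b c).
  rewrite leNgt; apply/negP => hlt; apply: hno; exists hI, (lI b c); split => //; split.
    by apply: swap_theta; exact: hf.1.
  rewrite muL_hI uL_hub /swapv eqxx; exact: hf.1.
have := feasL_ineq b c hf; have := iD_le R N; have := iD_pos R N; have := hf.1 hI.
move=> a b' c' d.
have : Dr^-1 * th hI <= 2^-1 * th (lI b c).
  apply: le_trans (_ : Dr^-1 * th (lI b c) <= _); first by apply: ler_wpM2l; lraD.
  by apply: ler_wpM2r; lraD.
lraD.
Qed.

Lemma eqL_stable : stable_eq uL muL eqL.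
Proof.
have ft : inTheta eqL by apply: mkv_theta; lraD.
split.
  by apply: feasL => // b c; rewrite /eqL mkv_lI mkv_hI mulr0 addr0.
move=> [i [x [hx [hT hmu]]]]; move: i x hx hT hmu; apply: agent_case.
  move=> x; rewrite /eqL mkv_hI => hx hT; have := hT hI; rewrite /upd eqxx; lraD.
move=> b c x; rewrite /eqL mkv_lI muL_lI uL_leaf upd_hI_l mkv_hI /upd eqxx => hx _.
rewrite mulr0 addr0; lraD.
Qed.

Lemma eqL_envy : envy_free uL muL eqL.
Proof.
have ft : inTheta eqL by apply: mkv_theta; lraD.
split.
  by apply: feasL => // b c; rewrite /eqL mkv_lI mkv_hI mulr0 addr0.
move=> [i [j [hlt [hT hmu]]]]; move: i j hlt hT hmu; apply: agent_case.
  move=> j; rewrite /eqL mkv_hI; have := ft j; rewrite /eqL; lraD.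
move=> b c; apply: agent_case; last first.
  by move=> b' c'; rewrite /eqL !mkv_lI; lraD.
move=> _ _; rewrite muL_lI uL_leaf swap_hI /swapv eqxx /eqL mkv_hI mkv_lI add0r mulr1.
have := iD_le R N; lraD.
Qed.

Lemma PoS_L : PoS_at_least uL muL (4^-1 * Num.sqrt (K%:R)).
Proof.
exists optL; split; first exact: optL_opt.
split; first by rewrite cost_optL Dr_pos.
split; first by exists eqL; exact: eqL_stable.
move=> th hs; apply: finalL; first by case: hs => -[].
exact: stable_L.
Qed.

Lemma PoF_L : PoF_at_least uL muL (4^-1 * Num.sqrt (K%:R)).
Proof.
exists optL; split; first exact: optL_opt.
split; first by rewrite cost_optL Dr_pos.
split; first by exists eqL; exact: eqL_envy.
move=> th hs; apply: finalL; first by case: hs => -[].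
exact: envy_L.
Qed.

End Lin2.

End L2.
Import L2.

Unset Implicit Arguments.
Set Strict Implicit.
Import Order.TTheory GRing.Theory Num.Theory.
Local Open Scope ring_scope.

Lemma K_ge (N : nat) : (N <= K N)%N.
Proof. rewrite K_val; lia. Qed.

Lemma W_off_bound (R : realType) (N : nat) (i j : 'I_(K N)) : i != j ->
  WL R N i j <= 2 / Num.sqrt ((K N)%:R).
Proof.
move=> nij; apply: le_trans (@WL_off R N i j nij) _.
have hs := sqrtK R N.
have hp : 0 < Num.sqrt ((K N)%:R : R) by rewrite sqrtr_gt0 ltr0n K_val.
have hd := Dr_gt0 R N.
rewrite ler_pdivlMr //.
have : Num.sqrt ((K N)%:R : R) * (N.+2%:R)^-1 <= 2 * N.+2%:R * (N.+2%:R)^-1.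
  by apply: ler_wpM2r => //; rewrite invr_ge0; apply: ltW.
rewrite -mulrA mulfV ?mulr1 ?gt_eqF // mulrC //.
Qed.

Theorem theorem4 (R : realType) :
  exists c : R, 0 < c /\
  (* (a) random coverage, uniform distributions over equal-size subsets *)
  (forall N : nat, exists k : nat, (N <= k)%N /\
     exists (n s : nat) (A : 'I_k -> {set 'I_n}) (mu : 'I_k -> R),
       (0 < s)%N /\ (forall i, #|A i| = s) /\
       wb_clp (u_cov (unif_dist R A)) mu /\
       PoS_at_least (u_cov (unif_dist R A)) mu (c * Num.sqrt (k%:R)) /\
       PoF_at_least (u_cov (unif_dist R A)) mu (c * Num.sqrt (k%:R))) /\
  (* (b) linear utilities u = W theta, W_ii = 1, W_ij = O(1/sqrt k) *)
  (exists C : R, 0 < C /\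
   forall N : nat, exists k : nat, (N <= k)%N /\
     exists (W : 'M[R]_k) (mu : 'I_k -> R),
       (forall i j, 0 <= W i j <= 1) /\ (forall i, W i i = 1) /\
       (forall i j, i != j -> W i j <= C / Num.sqrt (k%:R)) /\
       wb_clp (u_lin W) mu /\
       PoS_at_least (u_lin W) mu (c * Num.sqrt (k%:R)) /\
       PoF_at_least (u_lin W) mu (c * Num.sqrt (k%:R))).
Proof.
exists 4^-1; split; first lra.
split.
  move=> N; exists (K N); split; first exact: K_ge.
  exists (Np N), N.+2, (@Aset N), (@muA R N).
  split => //; split; first exact: card_Aset.
  split; first exact: wbA.
  split; [exact: PoS_A | exact: PoF_A].
exists 2; split; first lra.
move=> N; exists (K N); split; first exact: K_ge.
exists (WL R N), (@muL R N).
split; first exact: WL_bounds.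
split; first exact: WL_diag.
split; first exact: W_off_bound.
split; first exact: wbL.
split; [exact: PoS_L | exact: PoF_L].
Qed.
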